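(* Let $p>0$, $m>0$, and let $N$ be a random variable on $\mathbb{N}_0$ with the Takacs probability mass function \[ f(n)=\mathbb{P}(N=n)=\nu(n)\Big(\frac{m(p+m)}{(p+2m)^2}\Big)^{n}\Big(\frac{p+m}{p+2m}\Big)^{p},\qquad \nu(n)=\frac{p}{n+p}\,\frac{(n+p)(n+p+1)\cdots(2n+p-1)}{n!}, \] for $n\in\mathbb{N}_0$ (with $\nu(0)=1$). Let $b(n)=\frac{1}{\sqrt{n+1}}\big(\sqrt{1+\tfrac1n}-1\big)$ for $n\ge 1$. Then there is a constant $C$ not depending on $n$ such that \[ f(n\mid n\ge 1):=\mathbb{P}(N=n\mid N\ge 1)\le C\,b(n)\qquad\text{for all } n=1,2,\ldots. \]
   Context: $b$ is the probability mass function of $\lfloor U^{-2}\rfloor$ for $U$ uniform on $(0,1)$. The constant $C$ may depend on $p$ and $m$. *)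

(* Defs.v *)
From Stdlib Require Import Reals Arith.
Open Scope R_scope.

Fixpoint rising (a : R) (k : nat) : R :=
  match k with
  | O => 1
  | S j => rising a j * (a + INR j)
  end.

Definition takacs_nu (p : R) (n : nat) : R :=
  p / (INR n + p) * rising (INR n + p) n / INR (Factorial.fact n).

Definition takacs_pmf (p m : R) (n : nat) : R :=
  takacs_nu p n * (m * (p + m) / (p + 2 * m) ^ 2) ^ n
  * Rpower ((p + m) / (p + 2 * m)) p.

(* f(n | n >= 1) = P(N = n) / P(N >= 1), with P(N >= 1) = 1 - P(N = 0) *)
Definition takacs_cond (p m : R) (n : nat) : R :=
  takacs_pmf p m n / (1 - takacs_pmf p m 0).

Definition b (n : nat) : R :=
  / sqrt (INR n + 1) * (sqrt (1 + / INR n) - 1).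

(* Main.v *)
Require Import Defs.
From Stdlib Require Import Reals Lra Lia Psatz ZArith.
Open Scope R_scope.

Lemma rising_shift a k : rising (a + 1) k * a = rising a k * (a + INR k).
Proof.
  induction k as [|k IH]; cbn [rising]; [simpl; ring|].
  rewrite S_INR.
  replace (rising (a + 1) k * (a + 1 + INR k) * a)
    with (rising (a + 1) k * a * (a + 1 + INR k)) by ring.
  rewrite IH. ring.
Qed.

Lemma rising_pos a k : 0 < a -> 0 < rising a k.
Proof.
  intro Ha; induction k; simpl; [lra|].
  apply Rmult_lt_0_compat; auto. pose proof (pos_INR k); lra.
Qed.

Lemma nu_succ p n : 0 < p ->
  takacs_nu p (S n) * ((INR n + p + 1) * (INR n + 1)) =
  takacs_nu p n * ((2 * INR n + p) * (2 * INR n + p + 1)).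
Proof.
  intro hp. unfold takacs_nu.
  pose proof (pos_INR n) as Hn.
  assert (Hf : 0 < INR (Factorial.fact n)) by (apply lt_0_INR; apply lt_O_fact).
  rewrite fact_simpl, mult_INR, S_INR.
  replace (INR n + 1 + p) with ((INR n + p) + 1) by ring.
  assert (Hr := rising_shift (INR n + p) (S n)).
  simpl rising in Hr |- *.
  set (r := rising (INR n + p) n) in *.
  set (r1 := rising (INR n + p + 1) n) in *.
  rewrite S_INR in *.
  assert (E : r1 * (INR n + p + 1 + INR n) =
              r * (INR n + p + INR n) * (INR n + p + INR n + 1) / (INR n + p)).
  { apply (Rmult_eq_reg_r (INR n + p)); [|lra].
    rewrite Hr. field. lra. }
  rewrite E. field. repeat split; lra.
Qed.

Lemma nu_nonneg p n : 0 < p -> 0 <= takacs_nu p n.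
Proof.
  intro hp; unfold takacs_nu. pose proof (pos_INR n).
  assert (0 < INR (Factorial.fact n)) by (apply lt_0_INR; apply lt_O_fact).
  pose proof (rising_pos (INR n + p) n ltac:(lra)).
  apply Rlt_le. unfold Rdiv.
  repeat apply Rmult_lt_0_compat; try apply Rinv_0_lt_compat; lra.
Qed.

Lemma sum_ge h n k : (forall i, 0 <= h i) -> (k <= n)%nat -> h k <= sum_f_R0 h n.
Proof.
  intros H0 Hk. induction n.
  - assert (k = 0%nat) by lia. subst. simpl. lra.
  - simpl. destruct (Nat.eq_dec k (S n)).
    + subst. assert (0 <= sum_f_R0 h n).
      { clear -H0. induction n; simpl; [apply H0|]. pose proof (H0 (S n)); lra. }
      lra.
    + pose proof (H0 (S n)). assert (h k <= sum_f_R0 h n) by (apply IHn; lia). lra.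
Qed.

Lemma ev_decr h N : (forall i, 0 <= h i) -> (forall n, (N <= n)%nat -> h (S n) <= h n) ->
  forall n, h n <= sum_f_R0 h N.
Proof.
  intros H0 Hd n. induction n.
  - apply sum_ge; auto; lia.
  - destruct (le_lt_dec (S n) N).
    + apply sum_ge; auto.
    + pose proof (Hd n ltac:(lia)). lra.
Qed.

Lemma exists_big r : exists N : nat, r <= INR N.
Proof.
  destruct (archimed r) as [H1 _].
  destruct (Z_le_gt_dec (up r) 0).
  - exists 0%nat. simpl. apply IZR_le in l. lra.
  - exists (Z.to_nat (up r)). rewrite INR_IZR_INZ, Z2Nat.id by lia. lra.
Qed.

Lemma b_lower n : (1 <= n)%nat -> / (3 * (INR n + 1) ^ 2) <= b n.
Proof.
  intro Hn. apply le_INR in Hn. simpl in Hn. unfold b.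
  set (x := INR n) in *.
  assert (S1 : 1 + / (3 * x) <= sqrt (1 + / x)).
  { rewrite <- (sqrt_square (1 + / (3 * x))).
    2: { assert (0 < / (3*x)) by (apply Rinv_0_lt_compat; lra). lra. }
    apply sqrt_le_1_alt.
    assert (E : (1 + / (3*x)) * (1 + / (3*x)) = 1 + / x - (/x) * (1/3 - / (9 * x))).
    { field. lra. }
    rewrite E.
    assert (0 <= / x * (1/3 - / (9*x))).
    { apply Rmult_le_pos. left; apply Rinv_0_lt_compat; lra.
      assert (/ (9*x) <= / 9). { apply Rinv_le_contravar; lra. } lra. }
    lra. }
  assert (S2 : sqrt (x + 1) <= x + 1).
  { rewrite <- (sqrt_square (x+1)) at 2 by lra. apply sqrt_le_1_alt. nra. }
  assert (Sp : 0 < sqrt (x + 1)) by (apply sqrt_lt_R0; lra).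
  apply Rle_trans with (/ (x + 1) * / (3 * x)).
  - rewrite <- Rinv_mult. apply Rinv_le_contravar. nra. nra.
  - apply Rmult_le_compat.
    + left; apply Rinv_0_lt_compat; lra.
    + left; apply Rinv_0_lt_compat; lra.
    + apply Rinv_le_contravar; lra.
    + lra.
Qed.

Theorem mainTheorem5 (p m : R) (hp : 0 < p) (hm : 0 < m) :
  exists C : R, forall n : nat, (1 <= n)%nat -> takacs_cond p m n <= C * b n.
Proof.
  set (s := p + 2 * m).
  set (x := m * (p + m) / s ^ 2).
  set (Rp := Rpower ((p + m) / (p + 2 * m)) p).
  assert (HRp : 0 < Rp) by (unfold Rp, Rpower; apply exp_pos).
  assert (Hs : 0 < s) by (unfold s; lra).
  assert (Hx : 0 <= x) by (unfold x; apply Rlt_le; apply Rdiv_lt_0_compat; nra).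
  assert (Hx4 : 4 * x * s ^ 2 = s ^ 2 - p ^ 2).
  { unfold x, s. field. lra. }
  set (h := fun n => takacs_pmf p m n * (INR n + 1) ^ 2).
  assert (Hf : forall n, takacs_pmf p m n = takacs_nu p n * x ^ n * Rp) by reflexivity.
  assert (H0 : forall i, 0 <= h i).
  { intro i. unfold h. rewrite Hf. pose proof (nu_nonneg p i hp).
    pose proof (pow_le x i Hx). apply Rmult_le_pos; [|apply pow_le; pose proof (pos_INR i); lra].
    apply Rmult_le_pos; [|lra]. apply Rmult_le_pos; auto. }
  destruct (exists_big (s ^ 2 * (4 * p + 3) / p ^ 2)) as [N HN].
  assert (Hd : forall n, (N <= n)%nat -> h (S n) <= h n).
  { intros n Hn. apply le_INR in Hn.
    unfold h. rewrite !Hf, S_INR. change (x ^ S n) with (x * x ^ n).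
    pose proof (pos_INR n) as Hn0.
    set (k := INR n) in *.
    pose proof (nu_succ p n hp) as E. fold k in E.
    pose proof (nu_nonneg p n hp) as Hv.
    pose proof (nu_nonneg p (S n) hp) as Hv1.
    set (v := takacs_nu p n) in *. set (v1 := takacs_nu p (S n)) in *.
    assert (Hxn := pow_le x n Hx).
    set (xn := x ^ n) in *.
    assert (K : x * ((2 * k + p) * (2 * k + p + 1)) * (k + 2) ^ 2 <=
                (k + 1) ^ 3 * (k + p + 1)).
    { assert (Hk : s ^ 2 * (4 * p + 3) <= p ^ 2 * (k + 1)).
      { apply (Rmult_le_reg_r (/ p ^ 2)). apply Rinv_0_lt_compat; nra.
        replace (p ^ 2 * (k + 1) * / p ^ 2) with (k + 1) by (field; lra).
        unfold Rdiv in HN. lra. }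
      assert (A1 : (2 * k + p) * (2 * k + p + 1) <= 4 * (k + p + 1) ^ 2) by nra.
      assert (A2 : x * ((2 * k + p) * (2 * k + p + 1)) * (k + 2) ^ 2 <=
                   4 * x * (k + p + 1) ^ 2 * (k + 2) ^ 2).
      { apply Rmult_le_compat_r; [nra|]. nra. }
      assert (A3 : s^2 * (4 * x * (k + p + 1) ^ 2 * (k + 2) ^ 2) <=
                   s^2 * ((k + 1) ^ 3 * (k + p + 1))).
      { replace (s^2 * (4 * x * (k + p + 1) ^ 2 * (k + 2) ^ 2)) with
          ((s ^ 2 - p ^ 2) * (k + p + 1) ^ 2 * (k + 2) ^ 2)
          by (rewrite <- Hx4; ring).
        assert (B1 : (k + p + 1) * (k + 2) ^ 2 - (k + 1) ^ 3 <= (4 * p + 3) * (k + 1) ^ 2) by nra.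
        assert (B2 : p ^ 2 * (k+1) ^ 3 <= p^2 * ((k + p + 1) * (k + 2) ^ 2)).
        { apply Rmult_le_compat_l; nra. }
        assert (B3 : s^2 * ((k + p + 1) * (k + 2) ^ 2 - (k + 1) ^ 3) <= p ^ 2 * (k+1)^3).
        { apply Rle_trans with (s^2 * ((4 * p + 3) * (k + 1) ^ 2)).
          apply Rmult_le_compat_l; nra. nra. }
        nra. }
      apply Rmult_le_reg_l in A3; [|nra]. lra. }
    assert (Hpos : 0 < (k + p + 1) * (k + 1)) by nra.
    apply (Rmult_le_reg_r ((k + p + 1) * (k + 1))); [exact Hpos|].
    replace (v1 * (x * xn) * Rp * (k + 1 + 1) ^ 2 * ((k + p + 1) * (k + 1)))
      with ((v1 * ((k + p + 1) * (k + 1))) * x * xn * Rp * (k + 2) ^ 2) by ring.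
    rewrite E.
    replace (v * xn * Rp * (k + 1) ^ 2 * ((k + p + 1) * (k + 1)))
      with ((v * xn * Rp) * ((k + 1) ^ 3 * (k + p + 1))) by ring.
    replace (v * ((2 * k + p) * (2 * k + p + 1)) * x * xn * Rp * (k + 2) ^ 2)
      with ((v * xn * Rp) * (x * ((2 * k + p) * (2 * k + p + 1)) * (k + 2) ^ 2)) by ring.
    apply Rmult_le_compat_l; [|exact K].
    apply Rmult_le_pos; [|lra]. apply Rmult_le_pos; auto. }
  set (M := sum_f_R0 h N).
  assert (HM : forall n, h n <= M) by (intro; apply ev_decr; auto).
  set (D := / (1 - takacs_pmf p m 0)).
  exists (3 * M * Rabs D). intros n Hn.
  unfold takacs_cond. fold D.
  assert (Hfn : 0 <= takacs_pmf p m n).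
  { rewrite Hf. pose proof (nu_nonneg p n hp). pose proof (pow_le x n Hx).
    apply Rmult_le_pos; [|lra]. apply Rmult_le_pos; auto. }
  pose proof (b_lower n Hn) as Hb.
  pose proof (pos_INR n).
  assert (Hq : 0 < (INR n + 1) ^ 2) by (apply pow_lt; lra).
  assert (F1 : takacs_pmf p m n <= 3 * M * b n).
  { assert (takacs_pmf p m n = h n * / (INR n + 1) ^ 2) by (unfold h; field; lra).
    rewrite H1.
    assert (0 <= M) by (pose proof (H0 n); pose proof (HM n); lra).
    apply Rle_trans with (M * / (INR n + 1) ^ 2).
    apply Rmult_le_compat_r; [left; apply Rinv_0_lt_compat; lra| apply HM].
    replace (3 * M * b n) with (M * (3 * b n)) by ring.
    apply Rmult_le_compat_l; auto.
    replace (/ (INR n + 1) ^ 2) with (3 * / (3 * (INR n + 1) ^ 2)) by (field; lra).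
    lra. }
  unfold Rdiv.
  apply Rle_trans with (takacs_pmf p m n * Rabs D).
  - apply Rmult_le_compat_l; auto. apply Rle_abs.
  - replace (3 * M * Rabs D * b n) with (3 * M * b n * Rabs D) by ring.
    apply Rmult_le_compat_r; auto. apply Rabs_pos.
Qed.
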